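(* Consider the downlink of a multi-RIS multi-user MIMO system in which a base station (BS) with $M$ antennas serves $U_d$ direct users and $K$ blocked users, the $k$-th blocked user being served only through the $k$-th reconfigurable intelligent surface (RIS), which has $N$ elements. Let $\mathbf{H}_k\in\mathbb{C}^{M\times N}$ be the BS–RIS-$k$ channel, $\mathbf{h}_{k,1}=(h_{k,1},\dots,h_{k,N})^T\in\mathbb{C}^N$ the RIS-$k$–user channel (so $h_{k,i}$ is its $i$-th entry), and $\mathbf{h}_{d,u}\in\mathbb{C}^M$ the BS–direct-user-$u$ channel, all with complex normal entries, $\mathbb{E}\{\mathbf{H}_k^H\mathbf{H}_k\}=\mathbf{R}_k$ (invertible) and $\mathbb{E}\{\mathbf{H}_k^H\mathbf{H}_{k'}\}=\mathbf{0}$ for $k\ne k'$. Let $\mathbf{Q}_2=[\mathbf{H}_1\ \cdots\ \mathbf{H}_K\ \mathbf{h}_{d,1}\ \cdots\ \mathbf{h}_{d,U_d}]^H\in\mathbb{C}^{(NK+U_d)\times M}$ and let $\boldsymbol{\Gamma}\in\mathbb{R}^{(NK+U_d)\times(K+U_d)}$ be the matrix whose $k$-th column ($k\le K$) has ones in rows $(k-1)N+1,\dots,kN$ and zeros elsewhere, and whose last $U_d$ columns are $\begin{bmatrix}\mathbf{0}_{NK\times U_d}\\ \mathbf{I}_{U_d}\end{bmatrix}$. Use the beamforming matrix $\mathbf{W}'_{\mathrm{ZF}}=\mathbf{Q}_2^H(\mathbf{Q}_2\mathbf{Q}_2^H)^{-1}\boldsymbol{\Gamma}$, so that the SINR of the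 blocked user of RIS $k$ with phase shifts $\phi_{k,1},\dots,\phi_{k,N}$ is $$\mathrm{SINR}_{b,k,1}=\frac{\Big|\sum_{i=1}^{N}e^{j\phi_{k,i}}h_{k,i}^{*}\big[\mathbf{H}_k^H\mathbf{Q}_2^H(\mathbf{Q}_2\mathbf{Q}_2^H)^{-1}\boldsymbol{\Gamma}\mathbf{e}_k\big]_i\Big|^2}{\sigma_k^2}.$$ Then, as $M\to\infty$, the phase shifts of the $k$-th RIS that maximize this SINR are $$\phi_{k,i}=-\sphericalangle\big(h_{k,i}^{*}f_{k,i}\big),\qquad i=1,\dots,N,$$ and the maximum SINR is $$\mathrm{SINR}^{*}_{b,k,1}=\frac{1}{\sigma_k^2}\Big(\sum_{i=1}^{N}|f_{k,i}|\,|h_{k,i}|\Big)^2,$$ where $f_{k,i}$ is the $i$-th entry of $$\mathbf{f}_k=\begin{bmatrix}\mathbf{0}_{N\times(k-1)N} & \mathbf{R}_k & \mathbf{0}_{N\times((K-k)N+U_d)}\end{bmatrix}\,\mathrm{blkdiag}\big(\mathbf{R}_1^{-1},\dots,\mathbf{R}_K^{-1},\mathbf{I}_{U_d}\big)\,\boldsymbol{\Gamma}\,\mathbf{e}_k.$$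
   Context: $\mathbf{e}_k$ is the $k$-th standard unit vector of $\mathbb{R}^{K+U_d}$, $\sigma_k^2>0$ is the noise power at the user, $\sphericalangle(z)$ denotes the argument of a complex number $z$, $^*$ complex conjugation, $^H$ conjugate transpose, and $\mathrm{blkdiag}(\cdot)$ the block-diagonal matrix formed from its arguments. The beamformer requires $M>NK+U_d$. The asymptotic regime $M\to\infty$ refers to the limit in which inner products of BS-side channel columns converge to their expectations, i.e. $\mathbf{H}_k^H\mathbf{H}_n\to\mathbf{R}_k$ if $n=k$ and $\to\mathbf{0}$ if $n\ne k$. *)

(* Defs.v *)
From mathcomp Require Import all_boot all_order all_algebra.
From mathcomp Require Import reals trigo complex.
Set Implicit Arguments. Unset Strict Implicit. Unset Printing Implicit Defensive.
Import Order.TTheory GRing.Theory Num.Theory.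
Local Open Scope ring_scope.

Definition herm (C : pzRingType) m n (A : 'M[C[i]]_(m, n)) : 'M[C[i]]_(n, m) :=
  (map_mx (@conjc C) A)^T.

Definition expj (R : realType) (t : R) : R[i] := Complex (cos t) (sin t).

(* argument of a complex number (atan2 convention, value in (-pi, pi]; 0 at 0) *)
Definition carg (R : realType) (z : R[i]) : R :=
  let a := complex.Re z in let b := complex.Im z in
  if 0 < a then atan (b / a)
  else if a < 0 then (if 0 <= b then atan (b / a) + pi else atan (b / a) - pi)
  else if 0 < b then pi / 2 else if b < 0 then - (pi / 2) else 0.

(* block index decomposition of 'I_(K*N): a = blk a * N + elt a *)
Lemma blk_lt K N (a : 'I_(K * N)) : (a %/ N < K)%N.
Proof.
case: a => a /=; case: N => [|N]; first by rewrite muln0.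
by move=> Ha; rewrite ltn_divLR.
Qed.
Lemma elt_lt K N (a : 'I_(K * N)) : (a %% N < N)%N.
Proof.
case: a => a /=; case: N => [|N]; first by rewrite muln0.
by move=> _; rewrite ltn_pmod.
Qed.
Definition blk K N (a : 'I_(K * N)) : 'I_K := Ordinal (blk_lt a).
Definition elt K N (a : 'I_(K * N)) : 'I_N := Ordinal (elt_lt a).

Section Model.
Variables (R : realType) (M N K Ud : nat).
Local Notation C := R[i].

Definition Q2H (H : 'I_K -> 'M[C]_(M, N)) (hd : 'I_Ud -> 'cV[C]_M)
  : 'M[C]_(M, K * N + Ud) :=
  \matrix_(r < M, j < K * N + Ud)
    match split j with
    | inl a => H (blk a) r (elt a)
    | inr u => hd u r ord0
    end.

Definition Q2 H hd : 'M[C]_(K * N + Ud, M) := herm (Q2H H hd).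

(* Gamma in R^{(NK+Ud) x (K+Ud)} (embedded in C) *)
Definition Gamma : 'M[C]_(K * N + Ud, K + Ud) :=
  \matrix_(j, c)
    match split j, split c with
    | inl a, inl k => ((blk a == k) : nat)%:R
    | inr u, inr v => ((u == v) : nat)%:R
    | _, _ => 0
    end.

Definition ek (k : 'I_K) : 'cV[C]_(K + Ud) := delta_mx (lshift Ud k) ord0.

Definition blkdiag_inv (Rm : 'I_K -> 'M[C]_N) : 'M[C]_(K * N + Ud) :=
  \matrix_(j, j')
    match split j, split j' with
    | inl a, inl b => if blk a == blk b then invmx (Rm (blk a)) (elt a) (elt b) else 0
    | inr u, inr v => ((u == v) : nat)%:R
    | _, _ => 0
    end.

(* [0_{N x (k-1)N}  R_k  0_{N x ((K-k)N+Ud)}] *)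
Definition selR (Rm : 'I_K -> 'M[C]_N) (k : 'I_K) : 'M[C]_(N, K * N + Ud) :=
  \matrix_(i, j)
    match split j with
    | inl a => if blk a == k then Rm k i (elt a) else 0
    | inr _ => 0
    end.

Definition fvec (Rm : 'I_K -> 'M[C]_N) (k : 'I_K) : 'cV[C]_N :=
  selR Rm k *m blkdiag_inv Rm *m Gamma *m ek k.

Definition zf_vec H hd (k : 'I_K) : 'cV[C]_N :=
  herm (H k) *m Q2H H hd *m invmx (Q2 H hd *m Q2H H hd) *m Gamma *m ek k.

Definition sinr H hd (h1 : 'cV[C]_N) (sigma2 : R) (k : 'I_K) (phi : 'I_N -> R) : R :=
  (Normc.normc (\sum_(i < N) expj (phi i) * conjc (h1 i ord0) * zf_vec H hd k i ord0)) ^+ 2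
  / sigma2.

End Model.

(* Main.v *)
Require Import Defs.
From mathcomp Require Import all_boot all_order all_algebra.
From mathcomp Require Import reals trigo complex.
From mathcomp Require Import ring lra.
Import Order.TTheory GRing.Theory Num.Theory.
Local Open Scope ring_scope.

Lemma split_l m n (a : 'I_m) : split (lshift n a) = inl a.
Proof. exact: (unsplitK (inl a)). Qed.

Lemma idx_lt K N (k : 'I_K) (i : 'I_N) : (k * N + i < K * N)%N.
Proof.
apply: (@leq_trans (k.+1 * N)); last by rewrite leq_mul2r ltn_ord orbT.
by rewrite mulSnr ltn_add2l.
Qed.

Arguments idx_lt {K N}.

Definition idx K N Ud (k : 'I_K) (i : 'I_N) : 'I_(K * N + Ud) :=
  lshift Ud (Ordinal (idx_lt k i)).

Arguments idx {K N} Ud.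

Lemma blk_idx K N (k : 'I_K) (i : 'I_N) : blk (Ordinal (idx_lt k i)) = k.
Proof.
apply: val_inj => /=.
have N0 : (0 < N)%N by case: i => i /=; case: N {k} => // ?.
by rewrite divnMDl // divn_small // addn0.
Qed.

Lemma elt_idx K N (k : 'I_K) (i : 'I_N) : elt (Ordinal (idx_lt k i)) = i.
Proof.
by apply: val_inj => /=; rewrite modnMDl modn_small.
Qed.

Lemma idx_eq K N Ud (k : 'I_K) (a : 'I_(K * N)) (m : 'I_N) :
  (lshift Ud a == idx Ud k m) = (blk a == k) && (elt a == m).
Proof.
rewrite /idx (inj_eq (@lshift_inj _ _)).
apply/eqP/andP => [->|[/eqP hb /eqP he]]; first by rewrite blk_idx elt_idx.
apply: val_inj => /=; rewrite (divn_eq a N).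
by rewrite -[(a %/ N)%N]/(val (blk a)) -[(a %% N)%N]/(val (elt a)) hb he.
Qed.

Lemma sum_idx (C : pzRingType) K N Ud (k : 'I_K) (g : 'I_N -> C) (j : 'I_(K * N + Ud)) :
  \sum_m (g m * ((j == idx Ud k m) : nat)%:R) =
  match split j with inl a => if blk a == k then g (elt a) else 0 | inr _ => 0 end.
Proof.
case: splitP => [a ha | u hu].
  have -> : j = lshift Ud a by exact: val_inj.
  have [hb|hb] := eqVneq (blk a) k.
    rewrite (bigD1 (elt a)) //= idx_eq hb !eqxx mulr1 big1 ?addr0 // => m hm.
    by rewrite idx_eq hb eqxx /= eq_sym (negbTE hm) mulr0.
  by rewrite big1 // => m _; rewrite idx_eq (negbTE hb) mulr0.
have -> : j = rshift (K * N) u by exact: val_inj.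
by rewrite big1 // => m _; rewrite /idx eq_rlshift mulr0.
Qed.

Definition Pmx (C : pzRingType) K N Ud (k : 'I_K) : 'M[C]_(N, K * N + Ud) :=
  \matrix_(i, j) ((j == idx Ud k i) : nat)%:R.
Arguments Pmx C {K N} Ud k.

Lemma mulP (C : pzRingType) K N Ud (k : 'I_K) p (X : 'M[C]_(K * N + Ud, p)) i c :
  (Pmx C Ud k *m X) i c = X (idx Ud k i) c.
Proof.
rewrite mxE (bigD1 (idx Ud k i)) //= mxE eqxx mul1r big1 ?addr0 // => j /negbTE ne.
by rewrite mxE ne mul0r.
Qed.

Lemma mulPt (C : pzRingType) K N Ud (k : 'I_K) p (X : 'M[C]_(p, K * N + Ud)) r i :
  (X *m (Pmx C Ud k)^T) r i = X r (idx Ud k i).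
Proof.
rewrite mxE (bigD1 (idx Ud k i)) //= !mxE eqxx mulr1 big1 ?addr0 // => j /negbTE ne.
by rewrite !mxE ne mulr0.
Qed.

Section S.
Variable R : realType.
Local Notation C := R[i].

Lemma hermP M N K Ud (H : 'I_K -> 'M[C]_(M, N)) (hd : 'I_Ud -> 'cV[C]_M) k :
  herm (H k) = Pmx C Ud k *m Q2 H hd.
Proof.
apply/matrixP => i r; rewrite mulP /Q2 /herm !mxE /Q2H /idx split_l.
by rewrite blk_idx elt_idx.
Qed.

Lemma zf_one M N K Ud (H : 'I_K -> 'M[C]_(M, N)) (hd : 'I_Ud -> 'cV[C]_M) k :
  Q2 H hd *m Q2H H hd \in unitmx -> zf_vec H hd k = const_mx 1.
Proof.
move=> hG; rewrite /zf_vec (hermP _ _ _ _ H hd k) -(mulmxA (Pmx C Ud k)) mulmxK //.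
apply/matrixP => i c; rewrite -mulmxA mulP /ek -colE !mxE /idx !split_l blk_idx eqxx.
by [].
Qed.

Lemma f_one N K Ud (Rm : 'I_K -> 'M[C]_N) k :
  Rm k \in unitmx -> fvec Ud Rm k = const_mx 1.
Proof.
move=> hR.
have e1 : selR Ud Rm k = Rm k *m Pmx C Ud k.
  apply/matrixP => i j; rewrite !mxE.
  under eq_bigr do rewrite mxE.
  by rewrite (@sum_idx _ _ _ Ud k (fun m => Rm k i m) j).
have e2 : Gamma R N K Ud *m ek R Ud k = (Pmx C Ud k)^T *m const_mx 1.
  apply/matrixP => j c; rewrite /ek -colE !mxE.
  under eq_bigr do rewrite !mxE mulr1 -(mul1r (_%:R)).
  rewrite (@sum_idx _ _ _ Ud k (fun m => 1 : C) j) split_l.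
  by case: (split j) => // a; case: (blk a == k).
have e3 : Pmx C Ud k *m blkdiag_inv Ud Rm *m (Pmx C Ud k)^T = invmx (Rm k).
  apply/matrixP => i m; rewrite mulPt mulP /blkdiag_inv mxE /idx !split_l.
  by rewrite !blk_idx eqxx !elt_idx.
rewrite /fvec e1 -!mulmxA e2 !mulmxA -(mulmxA (Rm k)) -(mulmxA (Rm k)) e3.
by rewrite mulmxV // mul1mx.
Qed.

End S.
Section T.
Variable R : realType.
Local Open Scope complex_scope.

Lemma atan_cs (t : R) : 0 < cos (atan t) /\ sin (atan t) = t * cos (atan t).
Proof.
have hc : 0 < cos (atan t).
  by rewrite cos_atan invr_gt0 sqrtr_gt0; nra.
split => //.
by rewrite -{2}(atanK t) /tan divfK // gt_eqF.
Qed.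

Lemma cosBpi' (x : R) : cos (x - pi) = - cos x.
Proof. by have := cosDpi (x - pi); rewrite subrK => ->; rewrite opprK. Qed.
Lemma sinBpi' (x : R) : sin (x - pi) = - sin x.
Proof. by have := sinDpi (x - pi); rewrite subrK => ->; rewrite opprK. Qed.

Lemma carg_prop (a b : R) :
  0 <= cos (carg (Complex a b)) * a + sin (carg (Complex a b)) * b /\
  cos (carg (Complex a b)) * b - sin (carg (Complex a b)) * a = 0.
Proof.
rewrite /carg /=.
have key : forall a b : R, a != 0 ->
  b = (b / a) * a /\ 0 < cos (atan (b / a)) /\ sin (atan (b / a)) = (b / a) * cos (atan (b / a)).
  by move=> a' b' ha; split; [rewrite divfK | exact: atan_cs].
have [ha|ha] := ltP 0 a.
  have [hb [hc hs]] := key a b (lt0r_neq0 ha).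
  set t := b / a in hb hc hs *; set c := cos (atan t) in hc hs *.
  rewrite hs hb; split; last by ring.
  have -> : c * a + t * c * (t * a) = (c * a) * (1 + t * t) by ring.
  apply: mulr_ge0; nra.
have [ha'|ha'] := ltP a 0.
  have [hb [hc hs]] := key a b (ltr0_neq0 ha').
  set t := b / a in hb hc hs *.
  case: ifP => _.
    rewrite cosDpi sinDpi.
    set c := cos (atan t) in hc hs *.
    rewrite hs hb; split; last by ring.
    have -> : - c * a + - (t * c) * (t * a) = (c * - a) * (1 + t * t) by ring.
    apply: mulr_ge0; nra.
  rewrite cosBpi' sinBpi'.
  set c := cos (atan t) in hc hs *.
  rewrite hs hb; split; last by ring.
  have -> : - c * a + - (t * c) * (t * a) = (c * - a) * (1 + t * t) by ring.
  apply: mulr_ge0; nra.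
have a0 : a = 0 by apply/eqP; rewrite eq_le ha ha'.
subst a.
have [hb|hb] := ltP 0 b.
  rewrite cos_pihalf sin_pihalf; split; lra.
have [hb'|hb'] := ltP b 0.
  rewrite cosN sinN cos_pihalf sin_pihalf; split; lra.
rewrite cos0 sin0; split; lra.
Qed.

Lemma normc_expj (t : R) : Normc.normc (expj t) = 1.
Proof. by rewrite /expj /Normc.normc cos2Dsin2 sqrtr1. Qed.

Lemma normc_real (x : R) : 0 <= x -> Normc.normc (x%:C) = x.
Proof.
move=> hx; rewrite /Normc.normc /= expr0n /= addr0 sqrtr_sqr ger0_norm //.
Qed.

Lemma normc_conj (z : R[i]) : Normc.normc (conjc z) = Normc.normc z.
Proof. by case: z => a b; rewrite /Normc.normc /= sqrrN. Qed.

Lemma expj_carg (z : R[i]) : expj (- carg z) * z = (Normc.normc z)%:C.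
Proof.
case: z => a b.
have [hRe hIm] := carg_prop a b.
set th := carg (Complex a b) in hRe hIm *.
have ew : expj (- th) * (Complex a b) = (cos th * a + sin th * b)%:C.
  rewrite /expj cosN sinN /=; apply/eqP; rewrite eq_complex /=; apply/andP; split; apply/eqP.
    by rewrite mulNr opprK.
  by rewrite -hIm mulNr; lra.
have := congr1 (@Normc.normc R) ew.
rewrite Normc.normcM normc_expj mul1r normc_real // => ->.
exact: ew.
Qed.

Lemma normc_sum (I : finType) (F : I -> R[i]) :
  Normc.normc (\sum_i F i) <= \sum_i Normc.normc (F i).
Proof.
elim/big_rec2: _ => [|i x y _ h]; first by rewrite Normc.normc0.
apply: le_trans (le_normcD _ _) _; rewrite lerD2l; exact: h.
Qed.

Lemma normc_ge0 (z : R[i]) : 0 <= Normc.normc z.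
Proof. by case: z => a b; rewrite /Normc.normc sqrtr_ge0. Qed.

Lemma sq_le (x y : R) : 0 <= x -> x <= y -> x ^+ 2 <= y ^+ 2.
Proof. move=> *; nra. Qed.

End T.

Theorem proposition2 (R : realType) (M N K Ud : nat)
    (H : 'I_K -> 'M[R[i]]_(M, N)) (hd : 'I_Ud -> 'cV[R[i]]_M)
    (h1 : 'I_K -> 'cV[R[i]]_N) (Rm : 'I_K -> 'M[R[i]]_N)
    (sigma2 : 'I_K -> R) (k : 'I_K) :
  (K * N + Ud < M)%N ->
  (forall l, Rm l \in unitmx) ->
  (forall l, 0 < sigma2 l) ->
  (* asymptotic regime M -> oo: H_l^H H_n -> R_l if n = l, 0 otherwise *)
  (forall l n : 'I_K, herm (H l) *m H n = if n == l then Rm l else 0) ->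
  Q2 H hd *m Q2H H hd \in unitmx ->
  let f := fvec Ud Rm k in
  let SINR := sinr H hd (h1 k) (sigma2 k) k in
  let phistar := fun i : 'I_N => - carg (complex.conjc (h1 k i ord0) * f i ord0) in
  (forall phi : 'I_N -> R, SINR phi <= SINR phistar) /\
  SINR phistar =
    (\sum_(i < N) Normc.normc (f i ord0) * Normc.normc (h1 k i ord0)) ^+ 2 / sigma2 k.
Proof.
move=> _ hR hs _ hG f SINR phistar.
have hf : f = const_mx 1 by exact: f_one.
have hz : zf_vec H hd k = const_mx 1 by exact: zf_one.
have star : SINR phistar = (\sum_(i < N) Normc.normc (h1 k i ord0)) ^+ 2 / sigma2 k.
  rewrite /SINR /sinr /phistar hf hz.
  under eq_bigr do rewrite !mxE !mulr1 expj_carg normc_conj.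
  by rewrite -rmorph_sum normc_real // sumr_ge0 // => i _; apply: normc_ge0.
split; last first.
  rewrite star hf; congr (_ ^+ 2 / _); apply: eq_bigr => i _.
  by rewrite mxE Normc.normc1 mul1r.
move=> phi; rewrite star /SINR /sinr hz.
have hs' : 0 <= (sigma2 k)^-1 by rewrite invr_ge0 ltW.
apply: ler_wpM2r => //.
apply: sq_le; first by apply: normc_ge0.
apply: le_trans (normc_sum _ _ _) _.
under eq_bigr do rewrite mxE mulr1 Normc.normcM normc_expj mul1r normc_conj.
exact: lexx.
Qed.
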